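(* Let $G$ be a group, $H\le G$ with $[G:H]=m$, and $f_1,\dots,f_s:H\to G$ homomorphisms such that $G$ is self-similar and finite-state with respect to the $G$-data $((m,\dots,m),(H,\dots,H),(f_1,\dots,f_s))$ ($s$ entries each). Consider the following two $G^s$-data: (1) $((m^s,\dots,m^s),(H^s,\dots,H^s),(\rho_1,\dots,\rho_s))$ ($s$ entries each), where for $j=1,\dots,s$ the homomorphism $\rho_j:H^s\to G^s$ is $(h_1,\dots,h_s)\mapsto(h_1^{f_{j}},h_2^{f_{j+1}},\dots,h_s^{f_{j+s-1}})$, indices of the $f$'s taken modulo $s$ in $\{1,\dots,s\}$; (2) $((m^s,1),(H^s,G^s),(\rho,\tau))$, where $\rho:H^s\to G^s$, $(h_1,\dots,h_s)\mapsto(h_1^{f_1},\dots,h_s^{f_s})$, and $\tau:G^s\to G^s$, $(g_1,\dots,g_s)\mapsto(g_s,g_1,\dots,g_{s-1})$. Then each of these data is simple and $G^s$ is finite-state with respect to each of them.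
   Context: For $m\ge2$, $\mathcal A_m$ is the automorphism group of the one-rooted $m$-regular tree; each $\alpha\in\mathcal A_m$ is written $\alpha=(\alpha_1,\dots,\alpha_m)\sigma(\alpha)$ with $\sigma(\alpha)\in S_m$ the first-level action and $\alpha_i$ the states; $Q(\alpha)=\{\alpha\}\cup\bigcup_iQ(\alpha_i)$, $\alpha$ is finite-state if $Q(\alpha)$ is finite, and $\mathcal F_m$ is the group of finite-state automorphisms. Conventions: maps written on the right ($h^f$). A $G$-data $(\mathbf m,\mathbf H,\mathbf F)$ consists of subgroups $H_1,\dots,H_s$ with $[G:H_i]=m_i$, $m=\sum m_i$, and homomorphisms (virtual endomorphisms) $f_i:H_i\to G$. Choosing right transversals $T_i$ of $H_i$, with $\theta_i(g,t)=tg(t')^{-1}$ where $H_it'=H_itg$ and $g^\sigma$ the permutation $t\mapsto t'$ of $T_1\sqcup\dots\sqcup T_s\cong\{1,\dots,m\}$, the data induces $\varphi:G\to\mathcal A_m$, $g^\varphi=((\theta_i(g,t)^{f_i})^\varphi\mid t\in T_i,1\le i\le s)\,g^\sigma$, whose kernel is the $\mathbf F$-core: the largest subgroup of $\bigcap_iH_i$ normal in $G$ and $f_i$-invariant for all $i$ ($K$ is $f$-invariant if $K\subseteq\mathrm{dom}(f)$ and $K^f\le K$). The data is simple if the $\mathbf F$-core is trivial; the group is then self-similar with respect to it, and it is finite-state with respect to it if for some choice of transversals its image under $\varphi$ lies in $\mathcal F_m$. *)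

(* Defs.v *)
From Stdlib Require Import ClassicalEpsilon FunctionalExtensionality.
From mathcomp Require Import all_boot.
Set Implicit Arguments. Unset Strict Implicit. Unset Printing Implicit Defensive.

Record grp := Grp {
  gcar :> Type;
  gmul : gcar -> gcar -> gcar;
  gone : gcar;
  ginv : gcar -> gcar;
  gmulA : forall x y z, gmul x (gmul y z) = gmul (gmul x y) z;
  gmul1 : forall x, gmul gone x = x;
  gmulg1 : forall x, gmul x gone = x;
  gmulV : forall x, gmul (ginv x) x = gone;
  gmulgV : forall x, gmul x (ginv x) = gone }.

Section GroupDefs.
Variable G : grp.
Local Notation "x * y" := (gmul x y).
Local Notation "x ^-1" := (ginv x).
Local Notation "1" := (gone G).

Definition is_subgroup (H : G -> Prop) :=
  H 1 /\ (forall a b, H a -> H b -> H (a * b)) /\ (forall a, H a -> H (a^-1)).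

(* right cosets: H a = H b  iff  a * b^-1 \in H *)
Definition index (H : G -> Prop) (n : nat) :=
  exists tr : 'I_n -> G, forall g : G, exists! x, H (g * (tr x)^-1).

(* a homomorphism H -> G, given as a function on G whose values outside H are
   irrelevant *)
Definition hom_on (H : G -> Prop) (f : G -> G) :=
  forall a b, H a -> H b -> f (a * b) = f a * f b.

Definition normal (K : G -> Prop) := forall k g, K k -> K (g^-1 * k * g).
End GroupDefs.

Record data (G : grp) := Data {
  dn : nat;
  dm : 'I_dn -> nat;
  dH : 'I_dn -> G -> Prop;
  df : 'I_dn -> G -> G }.
Arguments dn {G} d.
Arguments dm {G} d i.
Arguments dH {G} d i _.
Arguments df {G} d i _.

Definition is_data (G : grp) (D : data G) :=
  forall i, is_subgroup (dH D i) /\ index (dH D i) (dm D i) /\ hom_on (dH D i) (df D i).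

(* The data is simple iff its F-core (the largest subgroup of /\_i H_i that is
   normal in G and f_i-invariant for all i) is trivial, i.e. every such subgroup
   is trivial. *)
Definition simple (G : grp) (D : data G) :=
  forall K : G -> Prop, is_subgroup K -> normal K ->
    (forall i k, K k -> dH D i k) ->
    (forall i k, K k -> K (df D i k)) ->
    forall k, K k -> k = gone G.

Definition asb (P : Prop) : bool :=
  if excluded_middle_informative P then true else false.

(* Letters of the tree are 'I_M; letter x belongs to component c x and
   represents the transversal element tr x of H_(c x). *)
Definition transversal_ok (G : grp) (D : data G) (M : nat)
    (c : 'I_M -> 'I_(dn D)) (tr : 'I_M -> G) :=
  (forall i, #|[pred x | c x == i]| = dm D i) /\
  (forall i (g : G), exists! x, c x = i /\ dH D i (gmul g (ginv (tr x)))).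

Arguments transversal_ok {G} D {M} c tr.

Definition cosrep (G : grp) (D : data G) (M : nat)
    (c : 'I_M -> 'I_(dn D)) (tr : 'I_M -> G) (x : 'I_M) (g : G) : 'I_M :=
  odflt x [pick y | (c y == c x) &&
                    asb (dH D (c x) (gmul (gmul (tr x) g) (ginv (tr y))))].

(* action of g^phi on words:
   (x w)^(g^phi) = x^(g^sigma) w^((theta(g,x)^(f_i))^phi) *)
Fixpoint phi (G : grp) (D : data G) (M : nat)
    (c : 'I_M -> 'I_(dn D)) (tr : 'I_M -> G) (w : seq 'I_M) (g : G) : seq 'I_M :=
  match w with
  | [::] => [::]
  | x :: w' =>
      let y := @cosrep G D M c tr x g in
      y :: @phi G D M c tr w' (df D (c x) (gmul (gmul (tr x) g) (ginv (tr y))))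
  end.

Arguments phi {G} D {M} c tr w g.

(* state (section) of alpha at vertex u: (u w)^alpha = u^alpha w^(alpha_u) *)
Definition state (A : Type) (alpha : seq A -> seq A) (u : seq A) : seq A -> seq A :=
  fun w => drop (size u) (alpha (u ++ w)).

Definition finite_state (A : Type) (alpha : seq A -> seq A) :=
  exists (n : nat) (L : 'I_n -> seq A -> seq A),
    forall u, exists k, state alpha u = L k.

Definition finite_state_wrt (G : grp) (D : data G) :=
  exists (M : nat) (c : 'I_M -> 'I_(dn D)) (tr : 'I_M -> G),
    transversal_ok D c tr /\ forall g : G, finite_state (fun w => phi D c tr w g).

Section Power.
Variables (G : grp) (s : nat).
Definition pcar := 'I_s -> G.
Definition pmul (a b : pcar) : pcar := fun i => gmul (a i) (b i).
Definition pone : pcar := fun _ => gone G.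
Definition pinv (a : pcar) : pcar := fun i => ginv (a i).
Lemma pmulA x y z : pmul x (pmul y z) = pmul (pmul x y) z.
Proof. apply: functional_extensionality => i; exact: gmulA. Qed.
Lemma pmul1 x : pmul pone x = x.
Proof. apply: functional_extensionality => i; exact: gmul1. Qed.
Lemma pmulg1 x : pmul x pone = x.
Proof. apply: functional_extensionality => i; exact: gmulg1. Qed.
Lemma pmulV x : pmul (pinv x) x = pone.
Proof. apply: functional_extensionality => i; exact: gmulV. Qed.
Lemma pmulgV x : pmul x (pinv x) = pone.
Proof. apply: functional_extensionality => i; exact: gmulgV. Qed.
Definition gpow : grp := Grp pmulA pmul1 pmulg1 pmulV pmulgV.
End Power.

Definition addI (s : nat) : 'I_s -> 'I_s -> 'I_s :=
  match s return 'I_s -> 'I_s -> 'I_s with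
  | 0 => fun i _ => i
  | n.+1 => fun i j => inord ((i + j) %% n.+1)
  end.
Definition predI (s : nat) : 'I_s -> 'I_s :=
  match s return 'I_s -> 'I_s with
  | 0 => fun i => i
  | n.+1 => fun k => inord ((k + n) %% n.+1)
  end.

Section TheData.
Variables (G : grp) (s m : nat) (H : G -> Prop) (f : 'I_s -> G -> G).

Definition data0 : data G := @Data G s (fun _ => m) (fun _ => H) f.

Definition Hpow : gpow G s -> Prop := fun h => forall k, H (h k).

(* rho_j (h_1..h_s) = (h_1^(f_j), h_2^(f_(j+1)), ..., h_s^(f_(j+s-1)));
   0-based: component k gets f_(j+k mod s) *)
Definition rhoj (j : 'I_s) (h : gpow G s) : gpow G s :=
  fun k => f (addI j k) (h k).
Definition rho (h : gpow G s) : gpow G s := fun k => f k (h k).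
Definition tau (g : gpow G s) : gpow G s := fun k => g (predI k).

Definition data1 : data (gpow G s) :=
  @Data (gpow G s) s (fun _ => m ^ s) (fun _ => Hpow) rhoj.

Definition data2 : data (gpow G s) :=
  @Data (gpow G s) 2
    (fun i => if i == ord0 then m ^ s else 1)
    (fun i => if i == ord0 then Hpow else (fun _ => True))
    (fun i => if i == ord0 then rho else tau).
End TheData.

(* Main.v *)
Require Import Defs.
From Stdlib Require Import ClassicalEpsilon FunctionalExtensionality.
From mathcomp Require Import all_boot.
Set Implicit Arguments. Unset Strict Implicit. Unset Printing Implicit Defensive.

Lemma asbE (P : Prop) : asb P = true <-> P.
Proof. rewrite /asb; case: excluded_middle_informative => //= _; split=> //. Qed.

Lemma ginv1 (G : grp) : ginv (gone G) = gone G.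
Proof. by rewrite -{1}(gmul1 (ginv (gone G))) gmulgV. Qed.

Section Generic.
Variables (G : grp) (D : data G) (M : nat) (c : 'I_M -> 'I_(dn D)) (tr : 'I_M -> G).

Definition nxt (x : 'I_M) (g : G) : G :=
  df D (c x) (gmul (gmul (tr x) g) (ginv (tr (@cosrep G D M c tr x g)))).

Lemma phi_cons x w g : phi D c tr (x :: w) g = @cosrep G D M c tr x g :: phi D c tr w (nxt x g).
Proof. by []. Qed.

Definition gst (u : seq 'I_M) (g : G) : G := foldl (fun g x => nxt x g) g u.

Lemma phi_cat u w g : phi D c tr (u ++ w) g = phi D c tr u g ++ phi D c tr w (gst u g).
Proof. by elim: u g => [|x u IH] g //=; rewrite IH. Qed.

Lemma size_phi u g : size (phi D c tr u g) = size u.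
Proof. by elim: u g => [|x u IH] g //=; rewrite IH. Qed.

Lemma state_phi g u : state (fun w => phi D c tr w g) u = (fun w => phi D c tr w (gst u g)).
Proof.
apply: functional_extensionality => w; rewrite /state phi_cat.
by rewrite -(size_phi u g) drop_size_cat.
Qed.

Lemma gst_rcons u x g : gst (rcons u x) g = nxt x (gst u g).
Proof. by rewrite /gst foldl_rcons. Qed.

Definition SS (g : G) := fun w => phi D c tr w g.

Lemma SS_cosrep x a b : SS a = SS b -> @cosrep G D M c tr x a = @cosrep G D M c tr x b.
Proof.
move=> E; have := f_equal (fun F => F [:: x]) E; rewrite /SS /=; by case.
Qed.

Lemma SS_nxt x a b : SS a = SS b -> SS (nxt x a) = SS (nxt x b).
Proof.
move=> E; apply: functional_extensionality => w.
have := f_equal (fun F => F (x :: w)) E; rewrite /SS /=; by case.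
Qed.

Lemma SS_gst u a b : SS a = SS b -> SS (gst u a) = SS (gst u b).
Proof. elim: u a b => [|x u IH] a b //= E; apply: IH; exact: SS_nxt. Qed.

Hypothesis Htr : transversal_ok D c tr.

Lemma cosrep_spec x g :
  let y := @cosrep G D M c tr x g in
  c y = c x /\ dH D (c x) (gmul (gmul (tr x) g) (ginv (tr y))) /\
  forall y', c y' = c x -> dH D (c x) (gmul (gmul (tr x) g) (ginv (tr y'))) -> y' = y.
Proof.
have [z [[cz Hz] Uz]] := (proj2 Htr) (c x) (gmul (tr x) g).
have Hy : @cosrep G D M c tr x g = z.
  rewrite /cosrep; case: pickP => [y /andP [/eqP cy /asbE Hy]|/(_ z)] /=.
    by apply/esym/Uz.
  by rewrite cz eqxx /= (proj2 (asbE _) Hz).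
rewrite Hy /=; split => //; split => // y' cy' Hy'; apply/esym/Uz; split => //.
Qed.

Lemma index_of_tr i : Defs.index (dH D i) (dm D i).
Proof.
set A := [pred y | c y == i].
have cA : #|A| = dm D i by rewrite (proj1 Htr).
pose tr' (x : 'I_(dm D i)) := tr (enum_val (cast_ord (esym cA) x)).
exists tr' => g.
have [z [[cz Hz] Uz]] := (proj2 Htr) i g.
have zA : z \in A by rewrite inE cz.
exists (cast_ord cA (enum_rank_in zA z)); split.
  by rewrite /tr' cast_ordK (enum_rankK_in zA zA).
move=> x' Hx'; apply: (can_inj (cast_ordKV cA)); rewrite cast_ordK.
have inA : enum_val (cast_ord (esym cA) x') \in A by apply: enum_valP.
have E : z = enum_val (cast_ord (esym cA) x').
  apply: Uz; split => //; move: inA; rewrite inE; exact/eqP.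
by rewrite -[cast_ord _ x'](enum_valK_in zA) -E.
Qed.
End Generic.

Lemma fs_of_idx (A : Type) (T : finType) (alpha : seq A -> seq A) (idx : seq A -> T) :
  (forall u u', idx u = idx u' -> state alpha u = state alpha u') -> finite_state alpha.
Proof.
move=> E; exists #|T|.
exists (fun i => state alpha (epsilon (inhabits [::]) (fun u => idx u = enum_val i))).
move=> u; exists (enum_rank (idx u)); apply: E.
rewrite (epsilon_spec (inhabits [::]) (fun u0 => idx u0 = enum_val (enum_rank (idx u)))) //.
  by rewrite enum_rankK.
by exists u; rewrite enum_rankK.
Qed.

Lemma fs_nat (A : Type) (alpha : seq A -> seq A) : finite_state alpha ->
  exists n (L : nat -> seq A -> seq A), forall u, exists2 k, k < n & state alpha u = L k.
Proof.
case=> [[|n] [L E]]; first by case: (E [::]) => -[].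
exists n.+1, (fun j => L (inord j)) => u; have [k ->] := E u.
by exists k => //; rewrite inord_val.
Qed.

Lemma card_inj_eq (A B : finType) (g : A -> B) (P : pred A) (Q : pred B) :
  injective g -> (forall a, Q (g a) = P a) -> (forall b, Q b -> exists a, g a = b) ->
  #|P| = #|Q|.
Proof.
move=> ig PQ sur; rewrite -(card_image ig P); apply: eq_card => b.
apply/imageP/idP => [[a aP ->]|Qb]; first by rewrite unfold_in /= PQ.
have [a ga] := sur b Qb; exists a => //; move: Qb; by rewrite -ga unfold_in /= PQ.
Qed.

Lemma foldr_mul_const (T : Type) (l : seq T) m :
  foldr muln 1 [seq m | _ <- l] = m ^ size l.
Proof. by elim: l => //= _ l ->; rewrite expnS. Qed.
Section Main.
Variables (G : grp) (n m : nat) (H : G -> Prop) (f : 'I_n.+1 -> G -> G).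
Variables (M0 : nat) (c0 : 'I_M0 -> 'I_n.+1) (tr0 : 'I_M0 -> G).
Hypothesis tro : transversal_ok (data0 m H f) c0 tr0.

Local Notation D0 := (data0 m H f).
Local Notation GS := (gpow G n.+1).

Definition V1 (p : 'I_n.+1 * {ffun 'I_n.+1 -> 'I_M0}) : bool :=
  [forall k, c0 (p.2 k) == addI p.1 k].
Definition T1 : finType := {p | V1 p}.
Definition M1 := #|T1|.
Definition c1 (y : 'I_M1) : 'I_n.+1 := (val (enum_val y)).1.
Definition tr1 (y : 'I_M1) : GS := fun k => tr0 ((val (enum_val y)).2 k).

Lemma V1P (p : T1) k : c0 ((val p).2 k) = addI (val p).1 k.
Proof. by have /forallP/(_ k)/eqP := valP p. Qed.

Lemma card_c0 j : #|[pred x | c0 x == j]| = m.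
Proof. exact: (proj1 tro j). Qed.

Lemma tro1 : transversal_ok (data1 m H f) c1 tr1.
Proof.
split.
  move=> i /=.
  rewrite (@card_inj_eq _ _ enum_val _ [pred p : T1 | (val p).1 == i]) //; first last.
  - by move=> b _; exists (enum_rank b); rewrite enum_rankK.
  - exact: enum_val_inj.
  rewrite (@card_inj_eq _ _ val _ [pred q | (q.1 == i) && V1 q]) //; first last.
  - by move=> q /andP [_ Vq]; exists (Sub q Vq).
  - by move=> a; rewrite /= (valP a) andbT.
  - exact: val_inj.
  set F := fun k : 'I_n.+1 => [pred x | c0 x == addI i k].
  rewrite -(@card_inj_eq _ _ (fun g : {ffun 'I_n.+1 -> 'I_M0} => (i, g)) (family F)); first last.
  - by move=> [i' g] /= /andP [/eqP -> _]; exists g.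
  - move=> a /=; rewrite eqxx /= /V1; apply: eq_forallb => k /=; by rewrite inE.
  - by move=> a b [].
  rewrite card_family /image_mem.
  rewrite (eq_map (g := fun _ => m)); last by move=> k; rewrite card_c0.
  by rewrite foldr_mul_const -cardE card_ord.
move=> i g.
have X : forall k, {x | c0 x = addI i k /\ H (gmul (g k) (ginv (tr0 x)))}.
  move=> k; apply: constructive_indefinite_description.
  by have [x [Hx _]] := (proj2 tro) (addI i k) (g k); exists x.
have Vp : V1 (i, [ffun k => sval (X k)]).
  by apply/forallP => k /=; rewrite ffunE (proj1 (svalP (X k))).
exists (enum_rank (Sub _ Vp : T1)); split.
  rewrite /c1 /tr1 enum_rankK /=; split => // k; rewrite /pmul /pinv ffunE; exact: (proj2 (svalP (X k))).
move=> y [cy Hy]; apply: enum_val_inj; rewrite enum_rankK; apply: val_inj => /=.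
rewrite [val (enum_val y)]surjective_pairing; congr pair; first by [].
apply/ffunP => k; rewrite ffunE.
have [x [_ Ux]] := (proj2 tro) (addI i k) (g k).
rewrite -(Ux (sval (X k))) ?(Ux ((val (enum_val y)).2 k)) //.
  by split; [rewrite V1P -cy | exact: Hy].
exact: (svalP (X k)).
Qed.

Hypothesis Hsub : is_subgroup H.
Hypothesis Hhom : forall i, hom_on H (f i).

Lemma Hpow_sub : is_subgroup (Hpow H : GS -> Prop).
Proof.
have [H1 [HM HV]] := Hsub.
split; first by move=> k.
by split=> [a b Ha Hb k|a Ha k]; [apply: HM|apply: HV].
Qed.

Lemma isd1 : is_data (data1 m H f).
Proof.
move=> i; split; first exact: Hpow_sub.
split; first exact: (index_of_tr tro1 i).
move=> a b Ha Hb; apply: functional_extensionality => k; exact: Hhom.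
Qed.

Local Notation cos0 := (@cosrep G D0 M0 c0 tr0).
Local Notation cos1 := (@cosrep GS (data1 m H f) M1 c1 tr1).
Local Notation nxt0 := (@nxt G D0 M0 c0 tr0).
Local Notation nxt1 := (@nxt GS (data1 m H f) M1 c1 tr1).
Local Notation SS0 := (@SS G D0 M0 c0 tr0).

Lemma cos1E l h :
  val (enum_val (cos1 l h)) = (c1 l, [ffun k => cos0 ((val (enum_val l)).2 k) (h k)]).
Proof.
have [cy [Hy _]] := cosrep_spec tro1 l h.
rewrite [LHS]surjective_pairing; congr pair; first exact: cy.
apply/ffunP => k; rewrite ffunE.
have [_ [_ U]] := cosrep_spec tro ((val (enum_val l)).2 k) (h k).
apply: U; last exact: (Hy k).
by rewrite !V1P; congr addI.
Qed.

Lemma nxt1E l h k : nxt1 l h k = nxt0 ((val (enum_val l)).2 k) (h k).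
Proof.
rewrite /nxt /= /rhoj /pmul /pinv /tr1 cos1E /= ffunE.
by rewrite V1P.
Qed.

Lemma Phi1 w h h' : (forall k, SS0 (h k) = SS0 (h' k)) ->
  phi (data1 m H f) c1 tr1 w h = phi (data1 m H f) c1 tr1 w h'.
Proof.
elim: w h h' => [|l w IH] h h' E //.
rewrite !phi_cons; congr cons.
  apply: enum_val_inj; apply: val_inj; rewrite !cos1E; congr pair.
  by apply/ffunP => k; rewrite !ffunE; apply: SS_cosrep.
by apply: IH => k; rewrite !nxt1E; apply: SS_nxt.
Qed.

Hypothesis fs0 : forall g0 : G, finite_state (fun w => phi D0 c0 tr0 w g0).

Lemma fs_gen (D' : data GS) (M' : nat) (c' : 'I_M' -> 'I_(dn D')) (tr' : 'I_M' -> GS) (g : GS) :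
  (forall h h', (forall k, SS0 (h k) = SS0 (h' k)) -> forall w, phi D' c' tr' w h = phi D' c' tr' w h') ->
  (forall u k, exists k' u0, SS0 (@gst GS D' M' c' tr' u g k) = SS0 (@gst G D0 M0 c0 tr0 u0 (g k'))) ->
  finite_state (fun w => phi D' c' tr' w g).
Proof.
move=> Phi Inv.
have X : forall k' : 'I_n.+1, {nL : nat * (nat -> seq 'I_M0 -> seq 'I_M0) |
   forall u, exists2 j, j < nL.1 & state (fun w => phi D0 c0 tr0 w (g k')) u = nL.2 j}.
  move=> k'; apply: constructive_indefinite_description.
  have [nn [L E]] := fs_nat (fs0 (g k')); by exists (nn, L).
set B := \max_(k' : 'I_n.+1) (sval (X k')).1.
pose P u (k : 'I_n.+1) := fun p : 'I_n.+1 * nat =>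
  p.2 < B.+1 /\ SS0 (@gst GS D' M' c' tr' u g k) = (sval (X p.1)).2 p.2.
have PE : forall u k, exists p, P u k p.
  move=> u k; have [k' [u0 E]] := Inv u k.
  have [j jlt Ej] := svalP (X k') u0.
  exists (k', j); split => /=.
    apply: (leq_trans jlt); apply: (leq_trans _ (leqnSn B)).
    exact: (leq_bigmax (F := fun k' => (sval (X k')).1) k').
  by rewrite E -Ej /SS state_phi.
pose idx u := [ffun k => let p := epsilon (inhabits (k, 0)) (P u k) in
                         (p.1, (inord p.2 : 'I_B.+1))].
apply: (fs_of_idx (idx := idx)) => u u' Eidx.
rewrite !state_phi; apply: functional_extensionality => w; apply: Phi => k.
move/ffunP/(_ k): Eidx; rewrite /idx !ffunE.
have S1 := @epsilon_spec _ (inhabits (k, 0)) (P u k) (PE u k).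
have S2 := @epsilon_spec _ (inhabits (k, 0)) (P u' k) (PE u' k).
case: S1 => lt1 E1; case: S2 => lt2 E2.
move: lt1 E1 lt2 E2.
case: (epsilon _ (P u k)) => a1 b1; case: (epsilon _ (P u' k)) => a2 b2 /= lt1 E1 lt2 E2.
case=> ea eb; rewrite E1 E2 ea; congr ((sval (X a2)).2 _).
by have := f_equal val eb; rewrite /= !inordK.
Qed.

Lemma Inv1 g u k : exists k' u0,
  SS0 (@gst GS (data1 m H f) M1 c1 tr1 u g k) = SS0 (@gst G D0 M0 c0 tr0 u0 (g k')).
Proof.
exists k; elim/last_ind: u => [|u l [u0 IH]]; first by exists [::].
exists (rcons u0 ((val (enum_val l)).2 k)).
by rewrite gst_rcons nxt1E gst_rcons; apply: SS_nxt.
Qed.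

Lemma fs1 : finite_state_wrt (data1 m H f).
Proof.
exists M1, c1, tr1; split; first exact: tro1.
move=> g; apply: fs_gen; last exact: Inv1.
move=> h h' E w; exact: Phi1.
Qed.

Definition V2 (x : {ffun 'I_n.+1 -> 'I_M0}) : bool := [forall k, c0 (x k) == k].
Definition T2 : finType := option {x | V2 x}.
Definition M2 := #|T2|.
Definition o1 : 'I_2 := @Ordinal 2 1 isT.
Definition c2 (y : 'I_M2) : 'I_2 := if enum_val y is Some _ then ord0 else o1.
Definition tr2 (y : 'I_M2) : GS :=
  if enum_val y is Some x then (fun k => tr0 (val x k)) else (fun _ => gone G).

Lemma V2P (x : {x | V2 x}) k : c0 (val x k) = k.
Proof. by have /forallP/(_ k)/eqP := valP x. Qed.

Lemma i2_cases (i : 'I_2) : i = ord0 \/ i = o1.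
Proof. case: i => [[|[|i]] Hi] //; [left|right]; exact: val_inj. Qed.

Lemma tro2 : transversal_ok (data2 m H f) c2 tr2.
Proof.
split.
  move=> i; case: (i2_cases i) => -> /=.
    rewrite (@card_inj_eq _ _ enum_val _ [pred o : T2 | o != None]) //; first last.
    - by move=> b _; exists (enum_rank b); rewrite enum_rankK.
    - by move=> a; rewrite /= /c2; case: (enum_val a).
    - exact: enum_val_inj.
    rewrite -(@card_inj_eq _ _ Some [pred x : {x | V2 x} | true]) //; first last.
    - by move=> [b|] //= _; exists b.
    - by move=> a b [].
    rewrite (@card_inj_eq _ _ val _ [pred q | V2 q]) //; first last.
    - by move=> q Vq; exists (Sub q Vq).
    - by move=> a; rewrite /= (valP a).
    - exact: val_inj.
    set F := fun k : 'I_n.+1 => [pred x | c0 x == k].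
    rewrite -(@card_inj_eq _ _ id (family F)) //; first last.
    - by move=> b _; exists b.
    rewrite card_family /image_mem.
    rewrite (eq_map (g := fun _ => m)); last by move=> k; rewrite card_c0.
    by rewrite foldr_mul_const -cardE card_ord.
  apply: (@eq_card1 _ (enum_rank None)) => y; rewrite !inE /c2.
  case E: (enum_val y) => [a|] /=.
    apply/esym/eqP => Ey; move: E; by rewrite Ey enum_rankK.
  rewrite eqxx; apply/esym/eqP; apply: enum_val_inj; by rewrite E enum_rankK.
move=> i g; case: (i2_cases i) => -> /=.
  have X : forall k, {x | c0 x = k /\ H (gmul (g k) (ginv (tr0 x)))}.
    move=> k; apply: constructive_indefinite_description.
    by have [x [Hx _]] := (proj2 tro) k (g k); exists x.
  have Vp : V2 [ffun k => sval (X k)].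
    by apply/forallP => k /=; rewrite ffunE (proj1 (svalP (X k))).
  exists (enum_rank (Some (Sub _ Vp))); split.
    rewrite /c2 /tr2 enum_rankK /=; split => // k; rewrite /pmul /pinv ffunE.
    exact: (proj2 (svalP (X k))).
  move=> y [cy Hy]; apply: enum_val_inj; rewrite enum_rankK.
  move: cy Hy; rewrite /c2 /tr2; case E: (enum_val y) => [x|] // _ Hy.
  congr Some; apply: val_inj => /=; apply/ffunP => k; rewrite ffunE.
  have [x0 [_ Ux]] := (proj2 tro) k (g k).
  rewrite -(Ux (sval (X k))) ?(Ux (val x k)) //.
    by split; [rewrite V2P | exact: Hy].
  exact: (svalP (X k)).
exists (enum_rank None); split.
  by rewrite /c2 enum_rankK.
move=> y [cy _]; move: cy; rewrite /c2; case E: (enum_val y) => [x|] // _.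
by rewrite -E enum_valK.
Qed.

Lemma isd2 : is_data (data2 m H f).
Proof.
move=> i; split; last split.
- by case: (i2_cases i) => -> /=; [exact: Hpow_sub|].
- exact: (index_of_tr tro2 i).
case: (i2_cases i) => -> /= a b Ha Hb; apply: functional_extensionality => k //.
exact: Hhom.
Qed.

Local Notation cos2 := (@cosrep GS (data2 m H f) M2 c2 tr2).
Local Notation nxt2 := (@nxt GS (data2 m H f) M2 c2 tr2).

Lemma cos2S l x h : enum_val l = Some x ->
  exists x', enum_val (cos2 l h) = Some x' /\ val x' = [ffun k => cos0 (val x k) (h k)].
Proof.
move=> El; have [cy [Hy _]] := cosrep_spec tro2 l h.
move: cy Hy; rewrite /c2 /tr2 El; case Ey: (enum_val (cos2 l h)) => [x'|] // _ /= Hy.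
exists x'; split => //; apply/ffunP => k; rewrite ffunE.
have [_ [_ U]] := cosrep_spec tro (val x k) (h k).
apply: U; last exact: (Hy k).
by rewrite !V2P.
Qed.

Lemma nxt2S l x h k : enum_val l = Some x -> nxt2 l h k = nxt0 (val x k) (h k).
Proof.
move=> El; have [x' [Ex' vx']] := cos2S h El.
rewrite /nxt /= /c2 /tr2 El Ex' /= /rho /pmul /pinv vx' ffunE.
by rewrite V2P.
Qed.

Lemma cos2N l h : enum_val l = None -> cos2 l h = l.
Proof.
move=> El; have [cy _] := cosrep_spec tro2 l h.
move: cy; rewrite /c2 El; case Ey: (enum_val (cos2 l h)) => [x'|] // _.
by apply: enum_val_inj; rewrite Ey El.
Qed.

Lemma nxt2N l h k : enum_val l = None -> nxt2 l h k = h (Defs.predI k).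
Proof.
move=> El; rewrite /nxt (cos2N h El) /= /c2 /tr2 El /= /tau /pmul /pinv.
by rewrite ginv1 gmulg1 gmul1.
Qed.

Lemma Phi2 w h h' : (forall k, SS0 (h k) = SS0 (h' k)) ->
  phi (data2 m H f) c2 tr2 w h = phi (data2 m H f) c2 tr2 w h'.
Proof.
elim: w h h' => [|l w IH] h h' E //.
rewrite !phi_cons; case El: (enum_val l) => [x|].
  congr cons.
    have [x1 [E1 v1]] := cos2S h El; have [x2 [E2 v2]] := cos2S h' El.
    apply: enum_val_inj; rewrite E1 E2; congr Some; apply: val_inj; rewrite /= v1 v2.
    by apply/ffunP => k; rewrite !ffunE; apply: SS_cosrep.
  by apply: IH => k; rewrite (nxt2S h k El) (nxt2S h' k El); apply: SS_nxt.
rewrite !cos2N //; congr cons; apply: IH => k; rewrite !nxt2N //.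
Qed.

Lemma Inv2 g u k : exists k' u0,
  SS0 (@gst GS (data2 m H f) M2 c2 tr2 u g k) = SS0 (@gst G D0 M0 c0 tr0 u0 (g k')).
Proof.
elim/last_ind: u k => [|u l IH] k; first by exists k, [::].
rewrite gst_rcons; case El: (enum_val l) => [x|].
  rewrite (nxt2S _ _ El); have [k' [u0 E]] := IH k.
  exists k', (rcons u0 (val x k)); rewrite gst_rcons; exact: SS_nxt.
rewrite nxt2N //; exact: IH.
Qed.

Lemma fs2 : finite_state_wrt (data2 m H f).
Proof.
exists M2, c2, tr2; split; first exact: tro2.
move=> g; apply: fs_gen; last exact: Inv2.
move=> h h' E w; exact: Phi2.
Qed.
End Main.
Section Simp.
Variables (G : grp) (n m : nat) (H : G -> Prop) (f : 'I_n.+1 -> G -> G).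
Local Notation GS := (gpow G n.+1).
Hypothesis simp0 : simple (data0 m H f).

Definition LL (K : GS -> Prop) (c : 'I_n.+1) : G -> Prop := fun x => exists a, K a /\ a c = x.

Lemma LL_sub K c : is_subgroup K -> is_subgroup (LL K c).
Proof.
move=> [K1 [KM KV]]; split; first by exists (fun _ => gone G).
split.
  move=> x y [a [Ka <-]] [b [Kb <-]]; by exists (pmul a b); split => //; apply: KM.
move=> x [a [Ka <-]]; by exists (pinv a); split => //; apply: KV.
Qed.

Lemma LL_norm K c : normal K -> normal (LL K c).
Proof.
move=> Kn x g [a [Ka <-]].
pose e : GS := fun i => if i == c then g else gone G.
exists (pmul (pmul (pinv e) a) e); split; first exact: (Kn a e Ka).
by rewrite /pmul /pinv /e eqxx.
Qed.

Lemma LL_triv K c : is_subgroup K -> normal K -> (forall a, K a -> Hpow H a) ->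
  (forall i x, LL K c x -> LL K c (f i x)) -> forall x, LL K c x -> x = gone G.
Proof.
move=> Ks Kn KH Kinv; apply: (@simp0 (LL K c) (@LL_sub K c Ks) (@LL_norm K c Kn)).
  by move=> i x [a [Ka <-]]; apply: KH.
exact: Kinv.
Qed.

Lemma addI_sol (c i : 'I_n.+1) : exists j : 'I_n.+1, addI j c = i.
Proof.
exists (inord ((i + (n.+1 - c)) %% n.+1)); apply: val_inj => /=.
rewrite !inordK ?ltn_pmod // modnDml -addnA subnK; last exact: ltnW (ltn_ord c).
by rewrite modnDr modn_small ?inordK ?ltn_ord // ltn_ord.
Qed.

Lemma simple1 : simple (data1 m H f).
Proof.
move=> K Ks Kn KH Kinv a Ka; apply: functional_extensionality => c.
apply: (LL_triv (K := K) (c := c)) => //.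
- by move=> b Kb; apply: (KH ord0).
- move=> i x [b [Kb <-]]; have [j Ej] := addI_sol c i.
  exists (rhoj f j b); split; first exact: Kinv.
  by rewrite /rhoj Ej.
- by exists a.
Qed.

Lemma predI_S j : j < n -> Defs.predI (inord j.+1 : 'I_n.+1) = inord j.
Proof.
move=> jn; apply: val_inj => /=; rewrite !inordK ?ltn_pmod ?ltnS ?(ltnW jn) //.
by rewrite addSnnS modnDr modn_small // ltnS ltnW.
Qed.

Lemma predI_0 : Defs.predI (ord0 : 'I_n.+1) = inord n.
Proof. by apply: val_inj => /=; rewrite add0n modn_small. Qed.

Lemma simple2 : simple (data2 m H f).
Proof.
move=> K Ks Kn KH Kinv.
have step : forall c x, LL K (Defs.predI c) x -> LL K c x.
  move=> c x [a [Ka <-]]; exists (tau a); split => //.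
  exact: (Kinv (@Ordinal 2 1 isT) a Ka).
have A : forall j, j <= n -> forall x, LL K ord0 x -> LL K (inord j) x.
  elim=> [|j IH] jn x Lx.
    by have -> : (inord 0 : 'I_n.+1) = ord0 by apply: val_inj; rewrite /= inordK.
  apply: step; rewrite predI_S //; apply: IH => //; exact: ltnW.
have B : forall t j x, j + t = n -> LL K (inord j) x -> LL K (inord n) x.
  elim=> [|t IH] j x E Lx; first by have -> : (inord n : 'I_n.+1) = inord j by congr inord; rewrite -E addn0.
  apply: (IH j.+1); first by rewrite addSnnS.
  apply: step; rewrite predI_S //; rewrite -E; by rewrite addnS ltnS leq_addr.
have toO : forall c x, LL K c x -> LL K ord0 x.
  move=> c x Lx; apply: step; rewrite predI_0.
  apply: (B (n - c) c); first by rewrite subnKC // -ltnS.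
  by rewrite inord_val.
have fromO : forall c x, LL K ord0 x -> LL K c x.
  move=> c x Lx; rewrite -(inord_val c); apply: A => //; by rewrite -ltnS ltn_ord.
have triv := LL_triv (K := K) (c := ord0) Ks Kn.
move=> a Ka; apply: functional_extensionality => c.
apply: triv; last by apply: (toO c); exists a.
  by move=> b Kb; apply: (KH ord0).
move=> i x Lx; have [b [Kb bx]] := fromO i x Lx.
apply: (toO i); exists (rho f b); split; first exact: (Kinv ord0 b Kb).
by rewrite /rho bx.
Qed.
End Simp.

Unset Implicit Arguments.

Theorem mainTheorem6 (G : grp) (s m : nat) (H : G -> Prop) (f : 'I_s -> G -> G) :
  0 < s ->
  is_data (data0 m H f) ->
  simple (data0 m H f) ->
  finite_state_wrt (data0 m H f) ->
  (is_data (data1 m H f) /\ simple (data1 m H f) /\ finite_state_wrt (data1 m H f)) /\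
  (is_data (data2 m H f) /\ simple (data2 m H f) /\ finite_state_wrt (data2 m H f)).
Proof.
move=> s_pos isd0 simp0 [M0 [c0 [tr0 [tro fs0]]]].
destruct s as [|n]; first by [].
have Hsub : is_subgroup H := proj1 (isd0 ord0).
have Hhom : forall i, hom_on H (f i) := fun i => proj2 (proj2 (isd0 i)).
split; split.
- exact: (isd1 tro Hsub Hhom).
- split; first exact: simple1.
  exact: (fs1 tro fs0).
- exact: (isd2 tro Hsub Hhom).
- split; first exact: simple2.
  exact: (fs2 tro fs0).
Qed.
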